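(* Let $c_m$ be an arbitrary finite sequence of complex numbers, and suppose $r|b^{\infty}$, meaning all the prime factors dividing $r$ also divide $b$. Then \begin{equation*} \sum_{x \bmod b} \Big| \sum_{m \geq 1} c_m S(rx, m ;br) \Big|^2 = b r^2 \sum_{\substack{y \bmod b \\ (y,b)=1}} \Big| \sum_{m \equiv 0 \bmod r} c_{m} e\Big(\frac{y m/r}{b}\Big) \Big|^2, \end{equation*} where $S(a,b;c)$ denotes the classical Kloosterman sum and $e(x)=e^{2\pi i x}$. *)

(* Defs.v *)
From mathcomp Require Import all_boot all_order all_algebra.
From mathcomp Require Import complex.
From mathcomp Require Import reals trigo.
Set Implicit Arguments. Unset Strict Implicit. Unset Printing Implicit Defensive.
Import Order.TTheory GRing.Theory Num.Theory.
Local Open Scope ring_scope.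

Definition e_ (R : realType) (t : R) : R[i] :=
  Complex (cos (2 * pi * t)) (sin (2 * pi * t)).

(* Classical Kloosterman sum
   S(a, b; c) = sum_{u mod c, (u,c)=1} e((a u + b ubar)/c),
   where ubar is the inverse of u mod c (the inner sum ranges over the
   unique residue v mod c with u v = 1 mod c). *)
Definition kloosterman (R : realType) (a b : int) (c : nat) : R[i] :=
  \sum_(u < c | coprime u c)
    \sum_(v < c | ((u * v) %% c == 1 %% c)%N)
      e_ ((a * (u : nat)%:Z + b * (v : nat)%:Z)%:~R / c%:R).

(* Main.v *)
Require Import Defs.
From mathcomp Require Import all_boot all_order all_algebra.
From mathcomp Require Import complex.
From mathcomp Require Import reals trigo.
From mathcomp Require Import ring lra.
Import Order.TTheory GRing.Theory Num.Theory.
Definition invmod (n v : nat) := ((egcdn v n).1 %% n)%N.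

Lemma invmodP n v : (0 < n)%N -> coprime v n -> (v * invmod n v) %% n = 1 %% n.
Proof.
move=> n0 cop.
case: (posnP v) => [v0|vp].
  by move: cop; rewrite v0 /coprime gcd0n => /eqP ->; rewrite !modn1.
rewrite /invmod; case: egcdnP => // km kn hk _ /=.
by rewrite modnMmr mulnC hk (eqP cop) modnMDl.
Qed.

Lemma invmod_lt n v : (0 < n)%N -> (invmod n v < n)%N.
Proof. by move=> n0; rewrite ltn_pmod. Qed.

Lemma inv_uniq d u u' v : (u * v = 1 %[mod d]) -> (u' * v = 1 %[mod d]) ->
  u = u' %[mod d].
Proof.
move=> h h'.
rewrite -[u]muln1 -modnMmr -h' modnMmr mulnCA -modnMmr mulnC -modnMml h.
by rewrite modn_mod modnMml mul1n.
Qed.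

Lemma cop_of_inv n u v : (u * v = 1 %[mod n]) -> coprime u n /\ coprime v n.
Proof.
move=> h; have : coprime (u * v) n.
  by rewrite /coprime -gcdn_modl h gcdn_modl gcd1n.
by rewrite coprimeMl => /andP.
Qed.

Lemma inv_swap d u v u' v' : (u * v = 1 %[mod d]) -> (u' * v' = 1 %[mod d]) ->
  (u == u' %[mod d]) = (v == v' %[mod d]).
Proof.
have key : forall u v u' v', (u * v = 1 %[mod d]) -> (u' * v' = 1 %[mod d]) ->
    (u = u' %[mod d]) -> (v = v' %[mod d]).
  move=> a x a' x' h h' e.
  apply: (@inv_uniq d x x' a); first by rewrite mulnC.
  by rewrite mulnC -modnMml e modnMml.
move=> h h'; apply/eqP/eqP; first exact: key.
by apply: key; rewrite mulnC.
Qed.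

Lemma cop_r (b r v : nat) : (0 < r)%N ->
  (forall p : nat, prime p -> (p %| r)%N -> (p %| b)%N) ->
  coprime v (b * r) = coprime (v %% b) b.
Proof.
move=> hr hrb; rewrite coprime_modl coprimeMr.
case cb: (coprime v b) => //=.
apply/negPn/negP => ncr.
have g1 : (1 < gcdn v r)%N.
  by rewrite ltn_neqAle eq_sym ncr /= gcdn_gt0 hr orbT.
have pp := pdiv_prime g1.
have pg := pdiv_dvd (gcdn v r).
have pv : (pdiv (gcdn v r) %| v)%N by apply: dvdn_trans pg (dvdn_gcdl _ _).
have pr : (pdiv (gcdn v r) %| r)%N by apply: dvdn_trans pg (dvdn_gcdr _ _).
have pb := hrb _ pp pr.
have : (pdiv (gcdn v r) %| gcdn v b)%N by rewrite dvdn_gcd pv pb.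
by rewrite (eqP cb) dvdn1 => /eqP p1; move: (prime_gt1 pp); rewrite p1.
Qed.

Local Open Scope ring_scope.
Local Open Scope complex_scope.
Lemma sum_res (V : nmodType) (b r y : nat) (f : nat -> V) : (y < b)%N ->
  \sum_(v < b * r | (v %% b == y)%N) f v = \sum_(t < r) f (y + b * t)%N.
Proof.
move=> yb; elim: r => [|r IH]; first by rewrite muln0 !big_ord0.
rewrite big_ord_recr /= -IH -!(big_mkord (fun v => (v %% b == y)%N)).
rewrite [LHS](big_cat_nat (n := (b * r)%N)) ?leq_mul2l ?leqnSn ?orbT //=.
congr (_ + _).
rewrite mulnS addnC -{1}[(b * r)%N]add0n big_addn addKn.
rewrite big_mkord (big_pred1 (Ordinal yb)) /=; first by rewrite addnC.
by move=> i /=; rewrite addnC mulnC modnMDl modn_small.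
Qed.
Section E.
Variable R : realType.
Implicit Types s t : R.

Lemma eD s t : e_ (s + t) = e_ s * e_ t.
Proof.
rewrite /e_ mulrDr cosD sinD /=; congr Complex; ring.
Qed.

Lemma e0 : e_ (0 : R) = 1.
Proof. by rewrite /e_ mulr0 cos0 sin0. Qed.

Lemma eJ t : conjc (e_ t) = e_ (- t).
Proof. by rewrite /e_ mulrN cosN sinN. Qed.

Lemma e_nat (k : nat) : e_ (k%:R : R) = 1.
Proof.
elim: k => [|k IH]; first exact: e0.
rewrite -addn1 natrD eD IH mul1r /e_ mulr1.
have -> : 2 * pi = pi *+ 2 :> R by rewrite mulr_natl.
by rewrite cos2pi sin2pi.
Qed.

Lemma e_int (z : int) : e_ (z%:~R : R) = 1.
Proof.
case: z => k; first by rewrite -pmulrn e_nat.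
by rewrite NegzE mulrNz -eJ e_nat conjc1.
Qed.

Lemma e_exp (x : nat) t : e_ (x%:R * t) = e_ t ^+ x.
Proof.
elim: x => [|x IH]; first by rewrite mul0r e0.
by rewrite -addn1 natrD mulrDl mul1r eD IH exprD expr1.
Qed.

Lemma e_ne1 t : 0 < t < 1 -> e_ t != 1.
Proof.
move=> /andP[t0 t1]; apply/eqP; rewrite /e_ => -[hc hs].
have h : 0 < sin (pi * t).
  apply: sin_gt0_pi; rewrite mulr_gt0 ?pi_gt0 //=.
  by rewrite -ltr_pdivlMl ?pi_gt0 // mulVf ?gt_eqF ?pi_gt0.
move: hc; have -> : 2 * pi * t = (pi * t) *+ 2 by rewrite -mulr_natl; ring.
rewrite cos_mulr2n => hc.
have := cos2Dsin2 (pi * t).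
move: hc h; set C := cos _; set S := sin _ => hc h hh.
nra.
Qed.

Lemma orth (b : nat) (k : int) : (0 < b)%N ->
  \sum_(x < b) e_ (x%:R * (k%:~R / b%:R) : R) =
  if (b%:Z %| k)%Z then b%:R else 0.
Proof.
move=> hb.
have bne0 : (b%:R : R) != 0 by rewrite pnatr_eq0 -lt0n.
under eq_bigr do rewrite e_exp.
set z := e_ _.
case: ifP => hd.
  have -> : z = 1.
    case/dvdzP: hd => q kq; rewrite /z kq rmorphM /= mulrK ?e_int //.
    by rewrite unitfE intr_eq0 eqz_nat -lt0n.
  by under eq_bigr do rewrite expr1n; rewrite sumr_const card_ord.
have zb : z ^+ b = 1 by rewrite /z -e_exp mulrC divfK // e_int.
have zn1 : z != 1.
  rewrite /z {1}(divz_eq k b%:Z) rmorphD rmorphM /= mulrDl -pmulrn mulrK ?unitfE // eD e_int mul1r.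
  have h0 : (0 <= (k %% b%:Z)%Z) by rewrite modz_ge0 // eqz_nat -lt0n.
  have h1 : ((k %% b%:Z)%Z < b%:Z) by rewrite ltz_pmod // ltz_nat.
  have h2 : (k %% b%:Z)%Z != 0 by apply/eqP => /dvdz_mod0P; rewrite hd.
  apply: e_ne1; apply/andP; split.
    by rewrite divr_gt0 ?ltr0n // ltr0z lt_neqAle eq_sym h2.
  by rewrite ltr_pdivrMr ?ltr0n // mul1r pmulrn ltr_int.
have := subrX1 z b; rewrite zb subrr => /esym/eqP; rewrite mulf_eq0 subr_eq0 (negbTE zn1) /=.
by move/eqP.
Qed.
End E.
Section Main.
Variables (R : realType) (N : nat) (c : nat -> R[i]) (b r : nat).
Hypotheses (hb : (0 < b)%N) (hr : (0 < r)%N)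
  (hrb : forall p : nat, prime p -> (p %| r)%N -> (p %| b)%N).

Definition G (v : nat) : R[i] :=
  \sum_(1 <= m < N.+1) c m * e_ ((m * v)%N%:R / (b * r)%N%:R).

Lemma n0 : (0 < b * r)%N. Proof. by rewrite muln_gt0 hb hr. Qed.

Lemma castE (x u m v : nat) :
  ((((r * x)%N%:Z * u%:Z + m%:Z * v%:Z)%:~R / (b * r)%N%:R) : R) =
  (x * u)%N%:R / b%:R + (m * v)%N%:R / (b * r)%N%:R.
Proof.
have bne : (b%:R : R) != 0 by rewrite pnatr_eq0 -lt0n.
have rne : (r%:R : R) != 0 by rewrite pnatr_eq0 -lt0n.
rewrite -!PoszM -PoszD -pmulrn !natrM natrD !natrM.
by field; rewrite bne rne.
Qed.

Lemma stepA (x : nat) :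
  \sum_(1 <= m < N.+1) c m * kloosterman R (r * x)%N%:Z m%:Z (b * r) =
  \sum_(v < b * r | coprime v (b * r))
     e_ ((x * invmod (b * r) v)%N%:R / b%:R) * G v.
Proof.
rewrite /kloosterman.
under eq_bigr do rewrite mulr_sumr.
rewrite exchange_big /=.
under eq_bigr => u _.
  under eq_bigr do rewrite mulr_sumr.
  rewrite exchange_big /=.
  under eq_bigr => v _.
    under eq_bigr do rewrite castE eD mulrCA.
    rewrite -mulr_sumr.
  over.
over.
rewrite /= (exchange_big_dep (fun v : 'I_(b * r) => coprime v (b * r))) /=.
  apply: eq_bigr => v cv.
  have il := @invmod_lt (b * r) v n0.
  rewrite (big_pred1 (Ordinal il)) /G //.
  move=> u /=; apply/idP/eqP.
    move=> /andP[_ h]; apply: val_inj => /=.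
    rewrite -(modn_small (ltn_ord u)) -(modn_small il).
    apply: (@inv_uniq _ _ _ v); first exact/eqP.
    by rewrite mulnC (invmodP _ _ n0 cv).
  move=> ->; rewrite /=.
  have h : (invmod (b * r) v * v = 1 %[mod b * r])%N by rewrite mulnC (invmodP _ _ n0 cv).
  by rewrite (cop_of_inv _ _ _ h).1 h eqxx.
by move=> u v _ /eqP h; case: (cop_of_inv _ _ _ h).
Qed.

End Main.
Section Main2.
Variables (R : realType) (N : nat) (c : nat -> R[i]) (b r : nat).
Hypotheses (hb : (0 < b)%N) (hr : (0 < r)%N)
  (hrb : forall p : nat, prime p -> (p %| r)%N -> (p %| b)%N).

Lemma orth2 (u u' : nat) :
  \sum_(x < b) e_ ((x * u)%N%:R / b%:R : R) * conjc (e_ ((x * u')%N%:R / b%:R)) =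
  if (u == u' %[mod b])%N then b%:R else 0.
Proof.
have bne : (b%:R : R) != 0 by rewrite pnatr_eq0 -lt0n.
under eq_bigr => x _.
  rewrite eJ -eD.
  have -> : ((x * u)%N%:R / b%:R - (x * u')%N%:R / b%:R : R) =
     x%:R * ((u%:Z - u'%:Z)%:~R / b%:R).
    by rewrite rmorphB /= -!pmulrn !natrM; field.
over.
by rewrite orth // -eqz_mod_dvd !modz_nat eqz_nat.
Qed.

Lemma modb_inv (v : nat) : coprime v (b * r) ->
  (invmod (b * r) v * v = 1 %[mod b])%N.
Proof.
move=> cv.
rewrite -(modn_dvdm _ (dvdn_mulr r (dvdnn b))) mulnC (invmodP _ _ (@n0 b r hb hr) cv).
by rewrite modn_dvdm // dvdn_mulr.
Qed.

Lemma stepB :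
  \sum_(x < b) `| \sum_(v < b * r | coprime v (b * r))
     e_ ((x * invmod (b * r) v)%N%:R / b%:R) * G R N c b r v | ^+ 2 =
  \sum_(v < b * r | coprime v (b * r)) \sum_(v' < b * r | coprime v' (b * r))
     G R N c b r v * conjc (G R N c b r v') * (if (v == v' %[mod b])%N then b%:R else 0).
Proof.
under eq_bigr do rewrite sqr_normc rmorph_sum big_distrlr /=.
rewrite exchange_big /=.
apply: eq_bigr => v cv.
rewrite exchange_big /=.
apply: eq_bigr => v' cv'.
under eq_bigr => x _.
  rewrite (rmorphM (@conjc R)) mulrACA mulrC.
over.
rewrite -mulr_sumr orth2.
rewrite (inv_swap _ _ _ _ _ (modb_inv _ cv) (modb_inv _ cv')).
by rewrite mulrC.
Qed.

End Main2.
Section Main3.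
Variables (R : realType) (N : nat) (c : nat -> R[i]) (b r : nat).
Hypotheses (hb : (0 < b)%N) (hr : (0 < r)%N)
  (hrb : forall p : nat, prime p -> (p %| r)%N -> (p %| b)%N).

Definition T (y : nat) : R[i] :=
  \sum_(v < b * r | coprime v (b * r) && (v %% b == y)%N) G R N c b r v.

Definition H (y : nat) : R[i] :=
  \sum_(1 <= m < N.+1 | (r %| m)%N) c m * e_ ((y * (m %/ r))%N%:R / b%:R).

Lemma stepD (y : nat) : (y < b)%N -> T y = if coprime y b then r%:R * H y else 0.
Proof.
move=> yb.
have bne : (b%:R : R) != 0 by rewrite pnatr_eq0 -lt0n.
have rne : (r%:R : R) != 0 by rewrite pnatr_eq0 -lt0n.
rewrite /T.
under eq_bigl => v.
  rewrite (cop_r _ _ _ hr hrb).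
  have -> : coprime (v %% b) b && (v %% b == y)%N = coprime y b && (v %% b == y)%N.
    by case: eqP => [->|_]; rewrite ?andbF.
over.
case: (coprime y b) => /=; last by rewrite big_pred0.
rewrite (sum_res _ _ _ _ _ yb) /G exchange_big /= /H mulr_sumr [RHS]big_mkcond /=.
apply: eq_bigr => m _.
under eq_bigr => t _.
  have -> : ((m * (y + b * t))%N%:R / (b * r)%N%:R : R) =
     (m * y)%N%:R / (b * r)%N%:R + t%:R * ((m%:Z)%:~R / r%:R).
    by rewrite -pmulrn !natrM natrD natrM; field; rewrite bne rne.
  rewrite eD mulrA.
over.
rewrite -mulr_sumr orth // dvdzE /=.
case: ifP => rm; last by rewrite mulr0.
rewrite [RHS]mulrC; congr (_ * _ * _).
congr e_.
move/divnK: rm => {1}<-.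
by rewrite !natrM; field; rewrite bne rne.
Qed.

End Main3.
Section Main4.
Variables (R : realType) (N : nat) (c : nat -> R[i]) (b r : nat).
Hypotheses (hb : (0 < b)%N) (hr : (0 < r)%N)
  (hrb : forall p : nat, prime p -> (p %| r)%N -> (p %| b)%N).

Lemma stepC :
  \sum_(v < b * r | coprime v (b * r)) \sum_(v' < b * r | coprime v' (b * r))
     G R N c b r v * conjc (G R N c b r v') * (if (v == v' %[mod b])%N then b%:R else 0)
  = b%:R * \sum_(y < b) T R N c b r y * conjc (T R N c b r y).
Proof.
pose p (v : 'I_(b * r)) : 'I_b := Ordinal (ltn_pmod v hb).
rewrite (partition_big p xpredT) //= mulr_sumr.
apply: eq_bigr => y _.
rewrite /T rmorph_sum big_distrlr /= mulr_sumr.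
apply: eq_big => [v|v /andP[cv /eqP vy]]; first by [].
rewrite mulr_sumr big_mkcondr /=.
apply: eq_bigr => v' cv'.
have vy2 : (v %% b)%N = y by rewrite -vy.
rewrite vy2 eq_sym.
case: ifP => _; last by rewrite mulr0.
by rewrite mulrC.
Qed.

Lemma stepE :
  \sum_(y < b) T R N c b r y * conjc (T R N c b r y) =
  (r ^ 2)%N%:R * \sum_(y < b | coprime y b) `| H R N c b r y | ^+ 2.
Proof.
rewrite mulr_sumr [RHS]big_mkcond /=.
apply: eq_bigr => y _.
rewrite (stepD _ _ _ _ _ hb hr hrb _ (ltn_ord y)).
case: ifP => _; last by rewrite rmorph0 mulr0.
rewrite sqr_normc rmorphM /= conjc_nat natrX expr2.
by rewrite mulrACA.
Qed.

End Main4.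

Theorem lemma11p2 (R : realType) (N : nat) (c : nat -> R[i]) (b r : nat)
  (hb : (0 < b)%N) (hr : (0 < r)%N)
  (hrb : forall p : nat, prime p -> (p %| r)%N -> (p %| b)%N) :
  \sum_(x < b)
     `| \sum_(1 <= m < N.+1) c m * kloosterman R (r * x)%N%:Z m%:Z (b * r) | ^+ 2
  = (b * r ^ 2)%N%:R *
    \sum_(y < b | coprime y b)
     `| \sum_(1 <= m < N.+1 | (r %| m)%N)
          c m * e_ ((y * (m %/ r))%N%:R / b%:R) | ^+ 2.
Proof.
under eq_bigr do rewrite (stepA _ _ _ _ _ hb hr).
rewrite (stepB _ _ _ _ _ hb hr) (stepC _ _ _ _ _ hb) (stepE _ _ _ _ _ hb hr hrb) natrM mulrA.
by [].
Qed.
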